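(* Let $(\Omega(\mathcal{A}),\mathrm{d},\bar{\mathrm{d}})$ be a bidifferential graded algebra and $M,N\ge1$. Let $P$ be an $N\times N$ matrix over $\mathcal{A}$, let $K$ be an $N\times M$ matrix over $\mathcal{A}$ with $\mathrm{d}K=\bar{\mathrm{d}}K=0$, and let $X'$ ($N\times N$) and $Y'$ ($M\times N$) be matrices over $\mathcal{A}$ with $$\bar{\mathrm{d}}X'=(\mathrm{d}X')P,\qquad \bar{\mathrm{d}}Y'=(\mathrm{d}Y')P .$$ (a) Let $R$ ($N\times N$) and $L$ ($M\times M$) be matrices over $\mathcal{A}$ with $\mathrm{d}R=\mathrm{d}L=0$, and suppose $L\,Y'=Y'\,P$ and $R\,X'=X'\,P$. If $X'-KY'$ is invertible, then $\Phi=Y'(X'-KY')^{-1}$ satisfies $\bar{\mathrm{d}}\,\mathrm{d}\,\Phi=(\mathrm{d}\Phi)\,Q\,(\mathrm{d}\Phi)$ with $Q=RK-KL$. (b) Suppose $M=N$, let $L$ be an $N\times N$ matrix over $\mathcal{A}$ with $\mathrm{d}L=0$, and suppose $L\,Y'=Y'\,P$ and $L\,X'+Y'=X'\,P$. If $X'-KY'$ is invertible, then $\Phi=Y'(X'-KY')^{-1}$ satisfies $\bar{\mathrm{d}}\,\mathrm{d}\,\Phi=(\mathrm{d}\Phi)\,Q\,(\mathrm{d}\Phi)$ with $Q=I+[L,K]=I+LK-KL$.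
   Context: $\mathcal{A}$ is a unital associative algebra over $\mathbb{C}$ with identity $I$. A bidifferential graded algebra $(\Omega(\mathcal{A}),\mathrm{d},\bar{\mathrm{d}})$ consists of a graded associative algebra $\Omega(\mathcal{A})=\bigoplus_{r\ge 0}\Omega^r(\mathcal{A})$ with $\Omega^0(\mathcal{A})=\mathcal{A}$ (each $\Omega^r(\mathcal{A})$ an $\mathcal{A}$-bimodule) together with two linear maps $\mathrm{d},\bar{\mathrm{d}}:\Omega^r(\mathcal{A})\to\Omega^{r+1}(\mathcal{A})$ satisfying the graded Leibniz rule $\mathrm{d}(\alpha\beta)=(\mathrm{d}\alpha)\beta+(-1)^r\alpha\,\mathrm{d}\beta$ for $\alpha\in\Omega^r(\mathcal{A})$ (and likewise for $\bar{\mathrm{d}}$), and $\mathrm{d}^2=\bar{\mathrm{d}}^2=0$, $\mathrm{d}\bar{\mathrm{d}}+\bar{\mathrm{d}}\mathrm{d}=0$. The maps $\mathrm{d},\bar{\mathrm{d}}$ are applied entrywise to matrices with entries in $\Omega(\mathcal{A})$, and products of such matrices use the matrix product together with the product of $\Omega(\mathcal{A})$. In (b), $I$ denotes the $N\times N$ identity matrix. *)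

(* Defs.v *)
From HB Require Import structures.
From mathcomp Require Import all_boot all_order all_algebra.
Set Implicit Arguments. Unset Strict Implicit. Unset Printing Implicit Defensive.
Import GRing.Theory.
Local Open Scope ring_scope.

(* A graded associative unital algebra Omega = (+)_{r>=0} Omega^r is modelled
   by a ring [Om] (the total algebra) together with the family of homogeneous
   components [deg r : pred Om] (Omega^r).  The algebra A is Omega^0. *)
Definition is_graded (Om : nzRingType) (deg : nat -> pred Om) : Prop :=
  [/\ (forall r, deg r 0) /\
      (forall r x y, deg r x -> deg r y -> deg r (x + y)),
      (forall r x, deg r x -> deg r (- x)),
      deg 0%N 1 /\
      (forall r s x y, deg r x -> deg s y -> deg (r + s)%N (x * y)),
      (forall x : Om, exists (n : nat) (f : nat -> Om),
          (forall i, deg i (f i)) /\ x = \sum_(i < n) f i) &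
      (forall (n : nat) (f : nat -> Om), (forall i, deg i (f i)) ->
          \sum_(i < n) f i = 0 -> forall i, (i < n)%N -> f i = 0)].

Definition is_graded_derivation (Om : nzRingType) (deg : nat -> pred Om)
    (d : Om -> Om) : Prop :=
  [/\ (forall x y, d (x + y) = d x + d y),
      (forall r x, deg r x -> deg r.+1 (d x)) &
      (forall r a b, deg r a -> d (a * b) = d a * b + (-1) ^+ r * (a * d b))].

Definition is_bdga (Om : nzRingType) (deg : nat -> pred Om)
    (d db : Om -> Om) : Prop :=
  [/\ is_graded deg, is_graded_derivation deg d, is_graded_derivation deg db,
      (forall x, d (d x) = 0) /\ (forall x, db (db x) = 0) &
      (forall x, d (db x) + db (d x) = 0)].

Definition mx_over0 (Om : nzRingType) (deg : nat -> pred Om) (m n : nat)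
    (X : 'M[Om]_(m, n)) : Prop := forall i j, deg 0%N (X i j).

Definition dmx (Om : nzRingType) (d : Om -> Om) (m n : nat)
    (X : 'M[Om]_(m, n)) : 'M[Om]_(m, n) := map_mx d X.

(* Main.v *)
Require Import Defs.
From HB Require Import structures.
From mathcomp Require Import all_boot all_order all_algebra.
Import GRing.Theory.
Local Open Scope ring_scope.
Set Implicit Arguments. Unset Strict Implicit. Unset Printing Implicit Defensive.

Section Aux.
Variables (Om : nzRingType) (deg : nat -> pred Om).
Hypothesis Hg : is_graded deg.

Definition mxo r m n (A : 'M[Om]_(m, n)) := forall i j, deg r (A i j).

Lemma deg_sum r n (F : 'I_n -> Om) : (forall i, deg r (F i)) -> deg r (\sum_(i < n) F i).
Proof.
case: Hg => [[H0 HD] _ _ _ _] HF.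
by apply: (big_ind (deg r)) => // x y; apply: HD.
Qed.

Lemma mxo_mul r s m n p (A : 'M[Om]_(m, n)) (B : 'M[Om]_(n, p)) :
  mxo r A -> mxo s B -> mxo (r + s)%N (A *m B).
Proof.
move=> hA hB i j; rewrite mxE; apply: deg_sum => k.
case: Hg => _ _ [_ HM] _ _; exact: HM.
Qed.

Lemma mxo_add r m n (A B : 'M[Om]_(m, n)) : mxo r A -> mxo r B -> mxo r (A + B).
Proof. move=> hA hB i j; rewrite mxE; case: Hg => [[_ HD] _ _ _ _]; exact: HD. Qed.

Lemma mxo_opp r m n (A : 'M[Om]_(m, n)) : mxo r A -> mxo r (- A).
Proof. move=> hA i j; rewrite mxE; case: Hg => _ HN _ _ _; exact: HN. Qed.

Lemma mxo_sub r m n (A B : 'M[Om]_(m, n)) : mxo r A -> mxo r B -> mxo r (A - B).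
Proof. by move=> hA hB; apply: mxo_add => //; apply: mxo_opp. Qed.

Lemma mxo1 n : mxo 0 (1%:M : 'M[Om]_n).
Proof.
move=> i j; rewrite mxE; case: Hg => [[H0 _] _ [H1 _] _ _].
by case: (i == j); rewrite ?mulr1n ?mulr0n.
Qed.

Variable d : Om -> Om.
Hypothesis Hd : is_graded_derivation deg d.

Lemma d0 : d 0 = 0.
Proof.
case: Hd => hadd _ _; have h := hadd 0 0; rewrite addr0 in h.
by apply: (addrI (d 0)); rewrite -h addr0.
Qed.

Lemma dN x : d (- x) = - d x.
Proof. case: Hd => hadd _ _; by apply: (addrI (d x)); rewrite -hadd !subrr d0. Qed.

Lemma dsum n (F : 'I_n -> Om) : d (\sum_(i < n) F i) = \sum_(i < n) d (F i).
Proof. case: Hd => hadd _ _; exact: (big_morph d hadd d0). Qed.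

Lemma mxo_dmx r m n (A : 'M[Om]_(m, n)) : mxo r A -> mxo r.+1 (dmx d A).
Proof. move=> hA i j; rewrite mxE; case: Hd => _ H _; exact: H. Qed.

Lemma dmxD m n (A B : 'M[Om]_(m, n)) : dmx d (A + B) = dmx d A + dmx d B.
Proof. case: Hd => hadd _ _; by apply/matrixP => i j; rewrite !mxE hadd. Qed.

Lemma dmxN m n (A : 'M[Om]_(m, n)) : dmx d (- A) = - dmx d A.
Proof. by apply/matrixP => i j; rewrite !mxE dN. Qed.

Lemma dmxB m n (A B : 'M[Om]_(m, n)) : dmx d (A - B) = dmx d A - dmx d B.
Proof. by rewrite dmxD dmxN. Qed.

Lemma dmx_mul0 m n p (A : 'M[Om]_(m, n)) (B : 'M[Om]_(n, p)) : mxo 0 A ->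
  dmx d (A *m B) = dmx d A *m B + A *m dmx d B.
Proof.
move=> hA; case: Hd => _ _ hl.
apply/matrixP=> i j; rewrite !mxE dsum -big_split; apply: eq_bigr => k _.
by rewrite !mxE (hl _ _ _ (hA i k)) expr0 mul1r.
Qed.

Lemma dmx_mul1 m n p (A : 'M[Om]_(m, n)) (B : 'M[Om]_(n, p)) : mxo 1 A ->
  dmx d (A *m B) = dmx d A *m B - A *m dmx d B.
Proof.
move=> hA; case: Hd => _ _ hl.
apply/matrixP=> i j; rewrite !mxE dsum -sumrN -big_split; apply: eq_bigr => k _.
by rewrite !mxE (hl _ _ _ (hA i k)) expr1 mulN1r.
Qed.

Lemma dmx1 n : dmx d (1%:M : 'M[Om]_n) = 0.
Proof.
case: Hd => _ _ hl; case: Hg => _ _ [H1 _] _ _.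
have h := hl 0%N 1 1 H1; rewrite !mulr1 expr0 !mul1r in h.
have e1 : d 1 = 0 by apply: (addIr (d 1)); rewrite -h add0r.
apply/matrixP=> i j; rewrite !mxE; case: (i == j).
  by rewrite mulr1n e1.
by rewrite mulr0n d0.
Qed.

End Aux.
Section Core.
Variables (Om : nzRingType) (deg : nat -> pred Om) (d db : Om -> Om).
Hypothesis HB : is_bdga deg d db.

Let Hg : is_graded deg. Proof. by case: HB. Qed.
Let Hd : is_graded_derivation deg d. Proof. by case: HB. Qed.
Let Hdb : is_graded_derivation deg db. Proof. by case: HB. Qed.

Lemma dd m n (A : 'M[Om]_(m, n)) : dmx d (dmx d A) = 0.
Proof. case: HB => _ _ _ [h _] _; by apply/matrixP => i j; rewrite !mxE h. Qed.

Lemma dbd m n (A : 'M[Om]_(m, n)) : dmx db (dmx d A) = - dmx d (dmx db A).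
Proof.
case: HB => _ _ _ _ h; apply/matrixP => i j; rewrite !mxE.
by apply/eqP; rewrite -addr_eq0 addrC h.
Qed.

Lemma core M N (X P R Z : 'M[Om]_N) (Y : 'M[Om]_(M, N)) (Q : 'M[Om]_(N, M)) :
  mxo deg 0 X -> mxo deg 0 Y -> mxo deg 0 Z -> mxo deg 0 R -> mxo deg 0 Q ->
  dmx db X = dmx d X *m P -> dmx db Y = dmx d Y *m P ->
  X *m P = R *m X + Q *m Y -> dmx d R = 0 -> dmx d Q = 0 ->
  Z *m X = 1%:M -> X *m Z = 1%:M ->
  dmx db (dmx d (Y *m Z)) = dmx d (Y *m Z) *m Q *m dmx d (Y *m Z).
Proof.
move=> oX oY oZ oR oQ BX BY XPe DR DQ ZX XZ.
set Phi := Y *m Z.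
have oPhi : mxo deg 0 Phi by exact: (mxo_mul Hg oY oZ).
have oDPhi : mxo deg 1 (dmx d Phi) by exact: mxo_dmx.
have oDX : mxo deg 1 (dmx d X) by exact: mxo_dmx.
have oDY : mxo deg 1 (dmx d Y) by exact: mxo_dmx.
have PhiX : Phi *m X = Y by rewrite /Phi -mulmxA ZX mulmx1.
have PhiZ : Y *m Z = Phi by [].
have dPhiX : dmx d Phi *m X = dmx d Y - Phi *m dmx d X.
  by rewrite -PhiX (dmx_mul0 Hd _ oPhi) addrK.
have bPhiX : dmx db Phi *m X = dmx d Phi *m X *m P.
  have := dmx_mul0 Hdb X oPhi; rewrite PhiX BY => h.
  by rewrite dPhiX mulmxBl h BX mulmxA addrK.
have bPhi : dmx db Phi = dmx d Phi *m X *m P *m Z.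
  by rewrite -bPhiX -mulmxA XZ mulmx1.
have BDY : dmx db (dmx d Y) = dmx d Y *m dmx d P.
  by rewrite dbd BY (dmx_mul1 Hd _ oDY) dd mul0mx sub0r opprK.
have BDX : dmx db (dmx d X) = dmx d X *m dmx d P.
  by rewrite dbd BX (dmx_mul1 Hd _ oDX) dd mul0mx sub0r opprK.
have DXP : dmx d X *m P + X *m dmx d P = R *m dmx d X + Q *m dmx d Y.
  rewrite -(dmx_mul0 Hd _ oX) XPe (dmxD Hd) (dmx_mul0 Hd _ oR) (dmx_mul0 Hd _ oQ).
  by rewrite DR DQ !mul0mx !add0r.
have T : dmx db (dmx d Phi) *m X =
   dmx d Phi *m dmx db X + dmx db (dmx d Y)
   - dmx db Phi *m dmx d X - Phi *m dmx db (dmx d X).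
  have h := dmx_mul1 Hdb X oDPhi.
  rewrite dPhiX (dmxB Hdb) (dmx_mul0 Hdb _ oPhi) in h.
  rewrite -[LHS](subrK (dmx d Phi *m dmx db X)) -h.
  by rewrite opprD addrC !addrA.
suff h : dmx db (dmx d Phi) *m X = dmx d Phi *m Q *m dmx d Phi *m X.
  by rewrite -[LHS]mulmx1 -XZ mulmxA h -mulmxA XZ mulmx1.
have ZL : forall (V : zmodType) (a b c e : V), a + (b + c) - e - c = a + b - e.
  by move=> V a b c e; rewrite addrA (addrAC _ c) addrK.
have eDY : dmx d Y = dmx d Phi *m X + Phi *m dmx d X by rewrite dPhiX subrK.
have E1 : dmx d Phi *m dmx d X *m P + dmx d Phi *m X *m dmx d P
    = dmx d Phi *m R *m dmx d X + dmx d Phi *m Q *m dmx d Y.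
  by rewrite -!mulmxA -mulmxDr DXP mulmxDr.
have E2 : dmx d Phi *m X *m P *m Z *m dmx d X
    = dmx d Phi *m R *m dmx d X + dmx d Phi *m Q *m Phi *m dmx d X.
  rewrite -(mulmxA _ X P) XPe mulmxDr !mulmxDl !mulmxA -(mulmxA _ X Z) XZ mulmx1.
  by rewrite -(mulmxA _ Y Z).
rewrite T BX BDY bPhi BDX eDY mulmxDl !mulmxA ZL E1 E2.
rewrite -(mulmxA _ _ X) dPhiX mulmxBr !mulmxA.
by rewrite opprD addrA (addrC (dmx d Phi *m R *m dmx d X)) addrK.
Qed.
End Core.

Theorem corollary1 (Om : nzRingType) (deg : nat -> pred Om) (d db : Om -> Om)
  (M N : nat) (P : 'M[Om]_(N, N)) (K : 'M[Om]_(N, M))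
  (X' : 'M[Om]_(N, N)) (Y' : 'M[Om]_(M, N)) :
  is_bdga deg d db -> (0 < M)%N -> (0 < N)%N ->
  mx_over0 deg P -> mx_over0 deg K -> mx_over0 deg X' -> mx_over0 deg Y' ->
  dmx d K = 0 -> dmx db K = 0 ->
  dmx db X' = dmx d X' *m P -> dmx db Y' = dmx d Y' *m P ->
  (* (a) *)
  (forall (R : 'M[Om]_(N, N)) (L : 'M[Om]_(M, M)),
     mx_over0 deg R -> mx_over0 deg L ->
     dmx d R = 0 -> dmx d L = 0 ->
     L *m Y' = Y' *m P -> R *m X' = X' *m P ->
     forall Z : 'M[Om]_(N, N), mx_over0 deg Z ->
       Z *m (X' - K *m Y') = 1%:M -> (X' - K *m Y') *m Z = 1%:M ->
       let Phi := Y' *m Z in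
       let Q := R *m K - K *m L in
       dmx db (dmx d Phi) = dmx d Phi *m Q *m dmx d Phi)
  /\
  (* (b) *)
  (forall (eMN : M = N) (L : 'M[Om]_(N, N)),
     mx_over0 deg L -> dmx d L = 0 ->
     let Y : 'M[Om]_(N, N) := castmx (eMN, erefl N) Y' in
     let KN : 'M[Om]_(N, N) := castmx (erefl N, eMN) K in
     L *m Y = Y *m P -> L *m X' + Y = X' *m P ->
     forall Z : 'M[Om]_(N, N), mx_over0 deg Z ->
       Z *m (X' - KN *m Y) = 1%:M -> (X' - KN *m Y) *m Z = 1%:M ->
       let Phi := Y *m Z in
       let Q := 1%:M + L *m KN - KN *m L in
       dmx db (dmx d Phi) = dmx d Phi *m Q *m dmx d Phi).
Proof.
move=> HB _ _ oP oK oX oY DK DbK BX BY.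
have Hg : is_graded deg by case: HB.
have Hd : is_graded_derivation deg d by case: HB.
have Hdb : is_graded_derivation deg db by case: HB.
have oX0 : mxo deg 0 X' by [].
have oY0 : mxo deg 0 Y' by [].
have oK0 : mxo deg 0 K by [].
split.
  move=> R L oR oL DR DL LY RX Z oZ ZX XZ; cbv zeta.
  apply: (@core Om deg d db HB M N (X' - K *m Y') P R Z Y' (R *m K - K *m L)) => //.
  - exact: (mxo_sub Hg oX0 (mxo_mul Hg oK0 oY0)).
  - exact: (mxo_sub Hg (mxo_mul Hg (oR : mxo deg 0 R) oK0) (mxo_mul Hg oK0 (oL : mxo deg 0 L))).
  - by rewrite (dmxB Hdb) (dmx_mul0 Hdb _ oK0) DbK mul0mx add0r BX BY (dmxB Hd) (dmx_mul0 Hd _ oK0) DK mul0mx add0r mulmxBl mulmxA.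
  - rewrite mulmxBl -mulmxA -LY -RX mulmxBr mulmxBl !mulmxA.
    by rewrite [RHS]addrA subrK.
  - by rewrite (dmxB Hd) (dmx_mul0 Hd _ oR) (dmx_mul0 Hd _ oK0) DR DK DL !mul0mx !mulmx0 !addr0 subrr.
move=> eMN; subst M => L oL DL; cbv zeta; rewrite !castmx_id => LY LXY Z oZ ZX XZ.
apply: (@core Om deg d db HB N N (X' - K *m Y') P L Z Y' (1%:M + L *m K - K *m L)) => //.
- exact: (mxo_sub Hg oX0 (mxo_mul Hg oK0 oY0)).
- apply: (mxo_sub Hg); last exact: (mxo_mul Hg oK0 (oL : mxo deg 0 L)).
  apply: (mxo_add Hg); first exact: mxo1.
  exact: (mxo_mul Hg (oL : mxo deg 0 L) oK0).
- by rewrite (dmxB Hdb) (dmx_mul0 Hdb _ oK0) DbK mul0mx add0r BX BY (dmxB Hd) (dmx_mul0 Hd _ oK0) DK mul0mx add0r mulmxBl mulmxA.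
- rewrite mulmxBl -mulmxA -LY -LXY mulmxBr !mulmxDl mul1mx mulNmx !mulmxA.
  by rewrite !addrA (addrAC (L *m X') _ Y') subrK.
- rewrite (dmxB Hd) (dmxD Hd) (dmx1 Hg Hd) (dmx_mul0 Hd _ oK0) (dmx_mul0 Hd _ (oL : mxo deg 0 L)).
  by rewrite DL DK !mul0mx !mulmx0 !addr0 subr0.
Qed.
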